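(* Let $k\in\mathbb N$, $1\le q<\infty$, $\alpha,\beta\in\mathbb R$, and $f\in\mathbb M_+^k\cap\mathbb W_q^{\alpha,\beta}$. Then, for every $\delta>0$, \[ \overleftarrow\Omega_\varphi^k(f,\delta)_{w_{\alpha,\beta},q}\le c\|w_{\alpha,\beta}f\|_{L_q[1-2k^2\delta^2,1]}, \] with $c$ independent of $f$ and $\delta$.
   Context: $w_{\alpha,\beta}(x)=(1+x)^\alpha(1-x)^\beta$; $\|g\|_{L_q(S)}$ is the $L_q$ norm over $S$, $\|\cdot\|_q$ the $L_q[-1,1]$ norm; $\mathbb W_q^{\alpha,\beta}=\{f:\|w_{\alpha,\beta}f\|_q<\infty\}$. $\Delta_h^k(f,x)=\sum_{i=0}^k\binom ki(-1)^{k-i}f(x-kh/2+ih)$ if $x\pm kh/2\in[-1,1]$, else $0$, and $\overleftarrow\Delta_h^k(f,x)=\Delta_h^k(f,x-kh/2)$. For a weight $w$, $\overleftarrow\Omega_\varphi^k(f,\delta)_{w,q}=\sup_{0<h\le2k^2\delta^2}\|w\overleftarrow\Delta_h^k(f,\cdot)\|_{L_q[1-2k^2\delta^2,1]}$. $\mathbb M^k$: functions on $(-1,1)$ with all $k$th divided differences at distinct points nonnegative; $\mathbb M_+^k=\{f\in\mathbb M^k:f=0\text{ on }(-1,0]\}$. *)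

(* Defs.v *)
From HB Require Import structures.
From mathcomp Require Import all_boot all_order all_algebra.
From mathcomp Require Import all_classical all_reals all_analysis.
Set Implicit Arguments. Unset Strict Implicit. Unset Printing Implicit Defensive.
Import Order.TTheory GRing.Theory Num.Theory.
Local Open Scope classical_set_scope.
Local Open Scope ring_scope.

Section Defs.
Variable R : realType.

Definition wab (alpha beta : R) (x : R) : R :=
  powR (1 + x) alpha * powR (1 - x) beta.

(* L_q norm over S (restricted to [-1,1], where all functions live):
   (\int_{S \cap [-1,1]} |g|^q)^{1/q}, as an extended real. *)
Definition LqS (q : R) (S : set R) (g : R -> R) : \bar R :=
  let D := S `&` `[(-1 : R), 1%R] in
  poweR (\int[lebesgue_measure]_(x in D) ((`|g x| `^ q)%R)%:E)%E q^-1.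

Definition Lq (q : R) (g : R -> R) : \bar R := LqS q `[(-1 : R), 1%R] g.

Definition Wq (q alpha beta : R) (f : R -> R) : Prop :=
  measurable_fun `[(-1 : R), 1%R] f /\ (Lq q (fun x => (wab alpha beta x * f x)%R) < +oo)%E.

Definition Delta (k : nat) (h : R) (f : R -> R) (x : R) : R :=
  if (-1 <= x - k%:R * h / 2) && (x + k%:R * h / 2 <= 1) then
    \sum_(i < k.+1) ('C(k, i))%:R * (-1) ^+ (k - i) *
       f (x - k%:R * h / 2 + i%:R * h)
  else 0.

Definition bDelta (k : nat) (h : R) (f : R -> R) (x : R) : R :=
  Delta k h f (x - k%:R * h / 2).

Definition bOmega (k : nat) (w : R -> R) (q : R) (f : R -> R) (delta : R)
  : \bar R :=
  ereal_sup [set LqS q `[1 - 2 * k%:R ^+ 2 * delta ^+ 2, 1]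
                     (fun x => w x * bDelta k h f x)
            | h in [set h : R | 0 < h <= 2 * k%:R ^+ 2 * delta ^+ 2]].

Definition divdiff (k : nat) (f : R -> R) (x : 'I_k.+1 -> R) : R :=
  \sum_(i < k.+1) f (x i) / \prod_(j < k.+1 | j != i) (x i - x j).

Definition Mk (k : nat) (f : R -> R) : Prop :=
  forall x : 'I_k.+1 -> R, injective x ->
    (forall i, -1 < x i < 1) -> 0 <= divdiff f x.

Definition Mkplus (k : nat) (f : R -> R) : Prop :=
  Mk k f /\ (forall x : R, -1 < x <= 0 -> f x = 0).

End Defs.

(* Main.v *)
Require Import Defs.
From HB Require Import structures.
From mathcomp Require Import all_boot all_order all_algebra.
From mathcomp Require Import all_classical all_reals all_analysis.
Import Order.TTheory GRing.Theory Num.Theory.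
Local Open Scope classical_set_scope.
Local Open Scope ring_scope.

Definition ptsf (R : realType) (n : nat) (z : nat -> R) (a b : R) (i : 'I_n.+2) : R :=
  if (i < n)%N then z (i : nat) else if (i == n :> nat) then a else b.

Arguments ptsf {R n}.

Lemma prod_pts (R : realType) (n : nat) (z : nat -> R) (a b t : R) (i0 : 'I_n.+2) :
  \prod_(j < n.+2 | j != i0) (t - ptsf z a b j) =
  \prod_(j < n | widen_ord (leqnSn _) (widen_ord (leqnSn _) j) != i0) (t - z j) *
  (if widen_ord (leqnSn _) ord_max != i0 then t - a else 1) *
  (if ord_max != i0 then t - b else 1).
Proof.
rewrite big_mkcond big_ord_recr big_ord_recr /= -big_mkcond /=.
rewrite /ptsf /= ltnn eqxx ltnNge leqnSn /= (gtn_eqF (ltnSn n)).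
congr (_ * _ * _); apply: eq_bigr => j _; by rewrite ltn_ord.
Qed.

Lemma divdiff_pts (R : realType) (n : nat) (f : R -> R) (z : nat -> R) (a b : R) :
  (forall j, (j < n)%N -> f (z j) = 0) ->
  divdiff f (@ptsf R n z a b) = f a / (\prod_(j < n) (a - z j) * (a - b)) +
     f b / (\prod_(j < n) (b - z j) * (b - a)).
Proof.
move=> hz; rewrite /divdiff big_ord_recr big_ord_recr /=.
rewrite big1 ?add0r; last first.
  by move=> i _; rewrite /ptsf /= ltn_ord hz ?mul0r.
rewrite !prod_pts.
have pa : ptsf z a b (widen_ord (leqnSn n.+1) (@ord_max n)) = a.
  by rewrite /ptsf /= ltnn eqxx.
have pb : ptsf z a b (@ord_max n.+1) = b.
  by rewrite /ptsf /= ltnNge leqnSn /= (gtn_eqF (ltnSn n)).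
rewrite pa pb.
have -> : \prod_(j < n | widen_ord (leqnSn _) (widen_ord (leqnSn _) j) != widen_ord (leqnSn _) (@ord_max n)) (a - z j) = \prod_(j < n) (a - z j).
  apply: eq_bigl => j; apply/negP => /eqP/(congr1 val) /= jn.
  by move: (ltn_ord j); rewrite jn ltnn.
have -> : \prod_(j < n | widen_ord (leqnSn _) (widen_ord (leqnSn _) j) != (@ord_max n.+1)) (b - z j) = \prod_(j < n) (b - z j).
  apply: eq_bigl => j; apply/negP => /eqP/(congr1 val) /= jn.
  by move: (ltn_ord j); rewrite jn ltnNge leqnSn.
have h1 : (widen_ord (leqnSn n.+1) (@ord_max n) != (@ord_max n.+1)).
  by apply/negP => /eqP/(congr1 val) /= /eqP; rewrite eqn_leq ltnn andbF.
rewrite eqxx h1 eq_sym h1 /=.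
by rewrite eqxx /= !mulr1.
Qed.

From mathcomp Require Import lra zify measurable_realfun.

Definition zpt (R : realType) (m : nat) : R := -1 + (m.+2%:R)^-1.

Lemma zpt_lt (R : realType) m : -1 < zpt R m < 0.
Proof.
rewrite /zpt; have h0 : 0 < (m.+2%:R : R)^-1 by rewrite invr_gt0 ltr0n.
have h1 : (m.+2%:R : R)^-1 < 1 by rewrite invf_lt1 ?ltr0n // ltr1n.
move: h0 h1; set x := (_^-1) => h0 h1; apply/andP; split; lra.
Qed.

Lemma zpt_inj (R : realType) m m' : zpt R m = zpt R m' -> m = m'.
Proof.
rewrite /zpt => /addrI/invr_inj/eqP; rewrite eqr_nat => /eqP[] //.
Qed.

Lemma core_mono (R : realType) n (f : R -> R) (a b : R) :
  Mkplus n.+1 f -> 0 <= a -> a < b -> b < 1 ->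
  f a / \prod_(j < n) (a - zpt R j) <= f b / \prod_(j < n) (b - zpt R j).
Proof.
move=> [hM h0] a0 ab b1.
have hz : forall j, (j < n)%N -> f (zpt R j) = 0.
  by move=> j _; apply: h0; have := zpt_lt R j => /andP[h1 h2]; apply/andP; split => //; apply: ltW.
have inj : injective (@ptsf R n (zpt R) a b).
  have f1 : (n.+1 < n)%N = false by lia.
  have f2 : (n.+1 == n) = false by lia.
  move=> i j; rewrite /ptsf.
  have [hi|[hi|hi]] : (i < n)%N \/ (i = n :> nat) \/ (i = n.+1 :> nat) by have := ltn_ord i; lia.
  - have [hj|[hj|hj]] : (j < n)%N \/ (j = n :> nat) \/ (j = n.+1 :> nat) by have := ltn_ord j; lia.
    + by rewrite hi hj => /zpt_inj e; apply: val_inj.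
    + rewrite hi hj ?ltnn ?eqxx ?f1 ?f2 /= => e; clear hi hj; exfalso; have := zpt_lt R i; rewrite e; lra.
    + rewrite hi hj ?ltnn ?eqxx ?f1 ?f2 /= => e; clear hi hj; exfalso; have := zpt_lt R i; rewrite e; lra.
  - have [hj|[hj|hj]] : (j < n)%N \/ (j = n :> nat) \/ (j = n.+1 :> nat) by have := ltn_ord j; lia.
    + rewrite hi hj ?ltnn ?eqxx ?f1 ?f2 /= => e; clear hi hj; exfalso; have := zpt_lt R j; rewrite -e; lra.
    + by move=> _; apply: val_inj; rewrite /= hi hj.
    + rewrite hi hj ?ltnn ?eqxx ?f1 ?f2 /= => e; clear hi hj; exfalso; lra.
  - have [hj|[hj|hj]] : (j < n)%N \/ (j = n :> nat) \/ (j = n.+1 :> nat) by have := ltn_ord j; lia.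
    + rewrite hi hj ?ltnn ?eqxx ?f1 ?f2 /= => e; clear hi hj; exfalso; have := zpt_lt R j; rewrite -e; lra.
    + rewrite hi hj ?ltnn ?eqxx ?f1 ?f2 /= => e; clear hi hj; exfalso; lra.
    + by move=> _; apply: val_inj; rewrite /= hi hj.
have rng : forall i, -1 < @ptsf R n (zpt R) a b i < 1.
  move=> i; rewrite /ptsf; case: ifP => _.
    by have := zpt_lt R i => /andP[h1 h2]; apply/andP; split => //; lra.
  by case: ifP => _; apply/andP; split; lra.
have := hM _ inj rng; rewrite divdiff_pts //.
have Pa : 0 < \prod_(j < n) (a - zpt R j).
  by apply: prodr_gt0 => j _; have := zpt_lt R j; lra.
have Pb : 0 < \prod_(j < n) (b - zpt R j).
  by apply: prodr_gt0 => j _; have := zpt_lt R j; lra.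
rewrite !invfM !mulrA.
have -> : (a - b)^-1 = - (b - a)^-1 by rewrite -invrN opprB.
have c0 : 0 < (b - a)^-1 by rewrite invr_gt0; lra.
move=> H; rewrite -subr_ge0 -(pmulr_lge0 _ c0) mulrBl; rewrite mulrN in H; lra.
Qed.

Lemma mono (R : realType) n (f : R -> R) :
  Mkplus n.+1 f -> forall a b : R, -1 < a -> a <= b -> b < 1 -> 0 <= f a <= f b.
Proof.
move=> hf a b a1 ab b1.
have h0 := hf.2.
have Pp : forall t, 0 <= t -> 0 < \prod_(j < n) (t - zpt R j).
  by move=> t t0; apply: prodr_gt0 => j _; have := zpt_lt R j; lra.
have nn : forall t, 0 < t -> t < 1 -> 0 <= f t.
  move=> t t0 t1; have := @core_mono R n f 0 t hf (lexx 0) t0 t1.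
  rewrite h0 ?mul0r; last by apply/andP; split; lra.
  have := Pp t (ltW t0); set P := \prod_(_ < _) _ => P0 H.
  have -> : f t = f t / P * P by rewrite divfK // gt_eqF.
  by apply: mulr_ge0 => //; apply: ltW.
have [b0|b0] := lerP b 0.
  by rewrite !h0 ?lexx //; apply/andP; split; lra.
have [a0|a0] := lerP a 0.
  by rewrite h0 ?lexx ?nn //; apply/andP; split; lra.
have fa0 := nn a a0 (le_lt_trans ab b1).
rewrite fa0 /=.
have [e|ab'] := eqVneq a b; first by rewrite e.
have ab2 : a < b by rewrite lt_neqAle ab'.
have := @core_mono R n f a b hf (ltW a0) ab2 b1.
have PaP := Pp a (ltW a0); have PbP := Pp b (ltW b0).
have Pab : \prod_(j < n) (a - zpt R j) <= \prod_(j < n) (b - zpt R j).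
  by apply: ler_prod => j _; have := zpt_lt R j => /andP[? ?]; apply/andP; split; lra.
move: PaP PbP Pab.
set Pa := \prod_(_ < _) (a - _); set Pb := \prod_(_ < _) (b - _) => PaP PbP Pab.
have -> : f a = f a / Pa * Pa by rewrite divfK // gt_eqF.
have -> : f b = f b / Pb * Pb by rewrite divfK // gt_eqF.
have u0 : 0 <= f a / Pa by apply: divr_ge0 => //; apply: ltW.
move=> H; apply: (le_trans (ler_wpM2l u0 Pab)); rewrite ler_pM2r //.  by move: H; rewrite !divfK // gt_eqF.
Qed.

Lemma pt_bound (R : realType) n (f : R -> R) (h x : R) :
  Mkplus n.+1 f -> 0 < h -> x < 1 -> x != n.+1%:R * h - 1 ->
  `|bDelta n.+1 h f x| <= 2 ^+ n.+1 * `|f x|.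
Proof.
move=> hf h0 x1 xp.
rewrite /bDelta /Delta; case: ifP => [/andP[c1 c2]|_]; last first.
  by rewrite normr0 mulr_ge0 ?exprn_ge0.
have kh0 : 0 < n.+1%:R * h by apply: mulr_gt0; rewrite ?ltr0n.
have xk : -1 < x - n.+1%:R * h.
  rewrite lt_neqAle; apply/andP; split; last by move: c1; set t := n.+1%:R * h; lra.
  apply: contra xp => /eqP e; apply/eqP; move: e; set t := n.+1%:R * h; lra.
have pts : forall i : 'I_n.+2, -1 < x - n.+1%:R * h / 2 - n.+1%:R * h / 2 + i%:R * h <= x.
  move=> i; have ik : (i%:R : R) <= n.+1%:R by rewrite ler_nat -ltnS.
  have ih : i%:R * h <= n.+1%:R * h by rewrite ler_pM2r.
  have i0 : 0 <= (i%:R : R) * h by apply: mulr_ge0; [exact: ler0n| exact: ltW].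
  move: ih i0 xk; set t := n.+1%:R * h; set s := i%:R * h => ih i0 xk'.
  apply/andP; split; lra.
have fx : 0 <= f x.
  by have /andP[] := @mono R n f hf x x ltac:(move: kh0 xk; set t := n.+1%:R * h; lra) (lexx x) x1.
rewrite (ger0_norm fx).
apply: le_trans (ler_norm_sum _ _ _) _.
have e2 : (2:R)^+n.+1 = \sum_(i < n.+2) ('C(n.+1, i))%:R.
  have -> : (2:R) = 1 + 1 by lra.
  by rewrite exprDn; apply: eq_bigr => i _; rewrite !expr1n mulr1.
rewrite e2 big_distrl /=; apply: ler_sum => i _.
have /andP[p1 p2] := pts i.
have /andP[fp0 fpx] := @mono R n f hf _ x p1 p2 x1.
rewrite normrM normrM normrX normrN1 expr1n mulr1 (ger0_norm (ler0n _ _)) (ger0_norm fp0).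
by rewrite ler_wpM2l ?ler0n.
Qed.

Lemma le_int_nm (R : realType) (D : set R) (f1 f2 : R -> \bar R) :
  (forall x, D x -> (0 <= f1 x)%E) -> (forall x, D x -> (f1 x <= f2 x)%E) ->
  (\int[lebesgue_measure]_(x in D) f1 x <= \int[lebesgue_measure]_(x in D) f2 x)%E.
Proof.
move=> f10 f12.
have f20 : forall x, D x -> (0 <= f2 x)%E by move=> x Dx; exact: le_trans (f10 x Dx) (f12 x Dx).
rewrite (@integral_mkcond _ _ _ lebesgue_measure D f1) (@integral_mkcond _ _ _ lebesgue_measure D f2) !ge0_integralTE; last 2 first.
- by move=> x; rewrite /patch; case: ifP => // /set_mem /f20.
- by move=> x; rewrite /patch; case: ifP => // /set_mem /f10.
apply: le_ereal_sup => _ [g /= hg <-]; exists g => //= x.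
apply: (le_trans (hg x)); rewrite /patch; case: ifP => // /set_mem /f12 //.
Qed.

Lemma wab_meas (R : realType) (alpha beta : R) (D : set R) :
  measurable_fun D (wab alpha beta).
Proof.
apply: measurable_funM.
- apply: (measurableT_comp (measurable_powR alpha)).
  by apply: measurable_funD => //; exact: measurable_cst.
- apply: (measurableT_comp (measurable_powR beta)).
  by apply: measurable_funB => //; exact: measurable_cst.
Qed.

Theorem lemma4p1 (R : realType) (k : nat) (q alpha beta : R) (hq : 1 <= q) :
  exists c : R, 0 < c /\
    forall (f : R -> R), Mkplus k f -> Wq q alpha beta f ->
    forall delta : R, 0 < delta ->
      (bOmega k (wab alpha beta) q f delta <=
       c%:E * LqS q `[(1 - 2 * k%:R ^+ 2 * delta ^+ 2)%R, 1%R]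
                   (fun x => (wab alpha beta x * f x)%R))%E.
Proof.
exists (2 ^+ k); split; first by rewrite exprn_gt0.
move=> f hf [mf _] delta d0.
apply: ge_ereal_sup => _ [h /andP[h0 hle] <-].
rewrite /LqS.
set D := `[(1 - 2 * k%:R ^+ 2 * delta ^+ 2)%R, 1%R] `&` `[(-1 : R), 1%R].
set c : R := 2 ^+ k.
set p : R := k%:R * h - 1.
set F1 := fun x => ((`|wab alpha beta x * bDelta k h f x| `^ q)%R)%:E.
set F2 := fun x => ((`|wab alpha beta x * f x| `^ q)%R)%:E.
set G := fun x => if (x == 1) || (x == p) then +oo%E else F2 x.
have c0 : 0 <= c by rewrite exprn_ge0.
have mD : measurable D by apply: measurableI; exact: measurable_itv.
have mF2 : measurable_fun (D : set R) (F2 : R -> \bar R).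
  apply/measurable_EFinP.
  apply: (measurableT_comp (measurable_powR q)).
  have mfD : measurable_fun D f.
    by apply: (measurable_funS (measurable_itv _) _ mf) => x [].
  apply: (@measurableT_comp _ _ _ _ _ _ (@Num.Def.normr _ R) D (fun x => wab alpha beta x * f x)); first exact: normr_measurable.
  exact: (measurable_funM (@wab_meas R alpha beta D) mfD).
have F20 : forall x, D x -> (0 <= F2 x)%E by move=> x _; rewrite lee_fin powR_ge0.
have F10 : forall x, D x -> (0 <= F1 x)%E by move=> x _; rewrite lee_fin powR_ge0.
have G0 : forall x, D x -> (0 <= G x)%E.
  by move=> x Dx; rewrite /G; case: ifP => _; [rewrite leey | exact: F20].
have eN : (fun x : R => (x == 1) || (x == p)) @^-1` [set true] = [set 1] `|` [set p].
  apply/seteqP; split => x /=.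
    by move/orP => [/eqP->|/eqP->]; [left|right].
  by case => ->; rewrite eqxx ?orbT.
have mB : measurable (D `&` (fun x : R => (x == 1) || (x == p)) @^-1` [set true]).
  by rewrite eN; apply: measurableI => //; apply: measurableU; exact: measurable_set1.
have mG : measurable_fun D G.
  rewrite /G; apply: measurable_fun_if => //.
  - exact: (measurable_fun_bool true).
  - by apply: (measurable_funS mD _ mF2) => x [].
have cq0 : 0 < c `^ q by apply: powR_gt0; rewrite exprn_gt0.
have pw : forall x, D x -> (F1 x <= (c `^ q)%:E * G x)%E.
  move=> x [Sx _]; rewrite /G; case: ifP => [_|/norP[x1 xp]].
    by rewrite muleC gt0_mulye ?leey // lte_fin.
  move: Sx; rewrite /= in_itv /= => /andP[Sx1 Sx2].
  have xl1 : x < 1 by rewrite lt_neqAle x1 Sx2.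
  have [n kn] : exists n, k = n.+1.
    case: (k) Sx1 => [|n] Sx1; last by exists n.
    by exfalso; move: Sx1; rewrite mulr0n expr2 !mulr0 !mul0r subr0 => Sx1; move: (le_lt_trans Sx1 xl1); rewrite ltxx.
  have hb : `|bDelta k h f x| <= c * `|f x|.
    rewrite /c kn; apply: pt_bound => //; first by rewrite -kn.
    by move: xp; rewrite /p kn.
  rewrite /F1 /F2 -EFinM lee_fin -powRM ?normr_ge0 //.
  apply: ge0_ler_powR; rewrite ?nnegrE ?normr_ge0 ?mulr_ge0 //; first by lra.
  rewrite !normrM mulrCA; apply: ler_wpM2l => //.
have I2 : (\int[lebesgue_measure]_(x in D) ((c `^ q)%:E * G x) =
          (c `^ q)%:E * \int[lebesgue_measure]_(x in D) G x)%E.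
  by apply: ge0_integralZl_EFin => //; exact: ltW.
have I3 : (\int[lebesgue_measure]_(x in D) G x = \int[lebesgue_measure]_(x in D) F2 x)%E.
  apply: ge0_ae_eq_integral => //.
  exists ([set 1] `|` [set p]); split.
  - by apply: measurableU; exact: measurable_set1.
  - apply/eqP; rewrite eq_le measure_ge0 andbT.
    apply: le_trans (measureU2 lebesgue_measure (measurable_set1 1) (measurable_set1 p)) _.
    change (lebesgue_measure [set 1%R] + lebesgue_measure [set p] <= 0)%E.
    by rewrite !lebesgue_measure_set1 adde0.
  - move=> x /= nx; have [->|x1] := eqVneq x 1; first by left.
    have [->|xp] := eqVneq x p; first by right.
    by exfalso; apply: nx => _; rewrite /G (negbTE x1) (negbTE xp).
have key : (\int[lebesgue_measure]_(x in D) F1 x <=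
            (c `^ q)%:E * \int[lebesgue_measure]_(x in D) F2 x)%E.
  by rewrite -I3 -I2; apply: le_int_nm.
have q0 : 0 < q by lra.
apply: (le_trans (gt0_ler_poweR _ _ _ key)).
- by rewrite invr_ge0; apply: ltW.
- by rewrite in_itv /= leey andbT integral_ge0.
- by rewrite in_itv /= leey andbT mule_ge0 ?integral_ge0 // lee_fin ltW.
rewrite poweRM ?lee_fin ?integral_ge0 ?powR_ge0 // poweR_EFin -powRrM mulfV ?gt_eqF //.
by rewrite powRr1.
Qed.
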